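(* Let $S$ be a standard quantum entity on a finite-dimensional complex Hilbert space $\mathcal{H}$. For unit vectors $c,d\in\mathcal{H}$ with corresponding states $p_{\bar c},p_{\bar d}$, we have $p_{\bar c}\perp p_{\bar d}$ if and only if $c\perp d$ (i.e. $\langle c,d\rangle=0$).
   Context: A spectral family of $\mathcal{H}$ is a set $E=\{E_1,\dots,E_r\}$ of pairwise orthogonal nonzero orthogonal projections with $\sum_kE_k=I$. The standard quantum entity on $\mathcal{H}$ has states $p_{\bar c}$, one for each ray $\bar c$ (one-dimensional subspace generated by a unit vector $c$), experiments $e_E$, one for each spectral family $E$, outcomes $x_{E_k}$, one for each orthogonal projection $E_k$, and outcome sets $O(e_E,p_{\bar c})=\{x_{E_k}:E_k\in E,\ E_kc\neq0\}$. State orthogonality: $p\perp q$ iff there is an experiment $e$ with $O(e,p)\cap O(e,q)=\emptyset$. *)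

(* Defs.v *)
(* Finite-dimensional complex Hilbert space H = C^n with
   C = R[i] (complex numbers over a realType R), column vectors 'cV[C]_n,
   operators = n x n matrices. *)
From mathcomp Require Import all_boot all_algebra.
From mathcomp Require Import reals complex.
Set Implicit Arguments. Unset Strict Implicit. Unset Printing Implicit Defensive.
Import GRing.Theory Num.Theory.
Local Open Scope ring_scope.

Section QE.
Variables (R : realType) (n : nat).
Local Notation C := (R[i]).

Definition inner (c d : 'cV[C]_n) : C := \sum_(i < n) c i ord0 * (d i ord0)^*.

Definition unit_vector (c : 'cV[C]_n) : Prop := inner c c = 1.

Definition adjoint (A : 'M[C]_n) : 'M[C]_n := map_mx Num.conj A^T.

Definition orth_proj (P : 'M[C]_n) : Prop := P *m P = P /\ adjoint P = P.

Definition spectral_family (E : seq 'M[C]_n) : Prop :=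
  [/\ uniq E,
      forall P, P \in E -> orth_proj P /\ P != 0,
      forall P Q, P \in E -> Q \in E -> P != Q -> P *m Q = 0
    & \sum_(P <- E) P = 1%:M].

(* Outcome set O(e_E, p_c) = { x_{E_k} : E_k in E, E_k c <> 0 };
   the outcome x_{E_k} is identified with the projection E_k itself. *)
Definition outcome_set (E : seq 'M[C]_n) (c : 'cV[C]_n) : 'M[C]_n -> Prop :=
  fun P => P \in E /\ P *m c != 0.

Definition state_orth (c d : 'cV[C]_n) : Prop :=
  exists E, spectral_family E /\
    (forall x, ~ (outcome_set E c x /\ outcome_set E d x)).

End QE.

(* Main.v *)
Require Import Defs.
From mathcomp Require Import all_boot all_algebra.
From mathcomp Require Import reals complex.
Import GRing.Theory Num.Theory.
Local Open Scope ring_scope.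

Section Aux.
Variables (R : realType).
Local Notation C := (R[i]).

Definition adj {m p} (A : 'M[C]_(m, p)) : 'M[C]_(p, m) := map_mx Num.conj A^T.

Lemma adjM m p q (A : 'M[C]_(m, p)) (B : 'M[C]_(p, q)) :
  adj (A *m B) = adj B *m adj A.
Proof. by rewrite /adj trmx_mul map_mxM. Qed.

Lemma adjK m p (A : 'M[C]_(m, p)) : adj (adj A) = A.
Proof. by apply/matrixP => i j; rewrite !mxE conjCK. Qed.

Lemma adjB m p (A B : 'M[C]_(m, p)) : adj (A - B) = adj A - adj B.
Proof. by apply/matrixP => i j; rewrite !mxE rmorphB. Qed.

Lemma adj1 m : adj (1%:M : 'M[C]_m) = 1%:M.
Proof. by apply/matrixP => i j; rewrite !mxE eq_sym rmorph_nat. Qed.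

Lemma adj0 m p : adj (0 : 'M[C]_(m, p)) = 0.
Proof. by apply/matrixP => i j; rewrite !mxE rmorph0. Qed.

Lemma innerE n (c d : 'cV[C]_n) : inner c d = (adj d *m c) ord0 ord0.
Proof. by rewrite /inner !mxE; apply: eq_bigr => i _; rewrite !mxE mulrC. Qed.

Lemma inner_conj n (c d : 'cV[C]_n) : inner d c = (inner c d)^*.
Proof. by rewrite /inner rmorph_sum; apply: eq_bigr => i _; rewrite rmorphM /= conjCK mulrC. Qed.

Lemma mx11_eq0 (A : 'M[C]_1) : A ord0 ord0 = 0 -> A = 0.
Proof. by move=> h; rewrite [A]mx11_scalar h; apply/matrixP => i j; rewrite !mxE; case: (i == j). Qed.

End Aux.
Arguments adj {R m p}.

Theorem mainTheorem15 (R : realType) (n : nat) (c d : 'cV[R[i]]_n) :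
  unit_vector c -> unit_vector d ->
  (state_orth c d <-> inner c d = 0).
Proof.
move=> uc ud.
have cn0 : c != 0.
  apply/eqP => c0; move: uc; rewrite /unit_vector /inner c0.
  rewrite big1 // => [|i _]; last by rewrite mxE mul0r.
  by move/esym/eqP; rewrite oner_eq0.
have dn0 : d != 0.
  apply/eqP => d0; move: ud; rewrite /unit_vector /inner d0.
  rewrite big1 // => [|i _]; last by rewrite mxE mul0r.
  by move/esym/eqP; rewrite oner_eq0.
split.
- case=> E [[uE hP hPQ hsum] disj].
  rewrite innerE.
  have -> : c = \sum_(P <- E) (P *m c) by rewrite -mulmx_suml hsum mul1mx.
  rewrite mulmx_sumr summxE big_seq big1 // => P PE.
  have [[PP aP] _] := hP P PE.
  have -> : adj d *m (P *m c) = adj (P *m d) *m (P *m c).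
    by rewrite adjM -[adj P]/(adjoint P) aP -mulmxA (mulmxA P) PP.
  case: (eqVneq (P *m c) 0) => [->|Pc]; first by rewrite mulmx0 mxE.
  case: (eqVneq (P *m d) 0) => [->|Pd]; first by rewrite adj0 mul0mx mxE.
  by exfalso; apply: (disj P).
- move=> icd.
  have cc : adj c *m c = 1%:M.
    by rewrite [adj c *m c]mx11_scalar -innerE uc.
  have cd : adj c *m d = 0.
    by apply: mx11_eq0; rewrite -innerE inner_conj icd rmorph0.
  pose P1 := c *m adj c.
  pose P2 := 1%:M - P1.
  have P1P1 : P1 *m P1 = P1 by rewrite /P1 mulmxA -(mulmxA c) cc mulmx1.
  have P1d : P1 *m d = 0 by rewrite /P1 -mulmxA cd mulmx0.
  have P1c : P1 *m c = c by rewrite /P1 -mulmxA cc mulmx1.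
  have P2c : P2 *m c = 0 by rewrite /P2 mulmxBl mul1mx P1c subrr.
  have P2d : P2 *m d = d by rewrite /P2 mulmxBl mul1mx P1d subr0.
  have aP1 : adjoint P1 = P1 by rewrite /adjoint -/(adj P1) /P1 adjM adjK.
  have P12 : P1 *m P2 = 0 by rewrite /P2 mulmxBr mulmx1 P1P1 subrr.
  have P21 : P2 *m P1 = 0 by rewrite /P2 mulmxBl mul1mx P1P1 subrr.
  have P1n0 : P1 != 0 by apply/eqP => h; move: cn0; rewrite -P1c h mul0mx eqxx.
  have P2n0 : P2 != 0 by apply/eqP => h; move: dn0; rewrite -P2d h mul0mx eqxx.
  have P1P2 : P1 != P2 by apply/eqP => h; move: cn0; rewrite -P1c h P2c eqxx.
  exists [:: P1; P2]; split.
  + split.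
    * by rewrite /= inE P1P2.
    * move=> P; rewrite !inE => /orP[] /eqP ->; split => //; split => //.
      - by rewrite /P2 mulmxBl mul1mx mulmxBr mulmx1 P1P1 subrr subr0.
      - by rewrite /adjoint -/(adj P2) /P2 adjB adj1; congr (_ - _); exact: aP1.
    * move=> P Q; rewrite !inE => /orP[] /eqP -> /orP[] /eqP ->;
        by rewrite ?eqxx.
    * by rewrite big_cons big_cons big_nil addr0 /P2 addrC subrK.
  + move=> x [[]]; rewrite !inE => /orP[] /eqP -> H1 [_ H2].
    * by move/eqP: H2; apply.
    * by move/eqP: H1; apply.
Qed.
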